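(* Let $G=(V,E)$ be a finite, connected, non-bipartite $d$-regular graph. Then $$\beta_{out}(G)\;\geq\;\beta(G)\;\geq\;\tfrac{1}{d}\,\beta_{out}(G).$$
   Context: For $A,B\subseteq V$, $e(A,B)$ denotes the number of ordered pairs $(a,b)\in A\times B$ with $a\sim b$ (so $e(A,A)$ is twice the number of edges inside $A$). For $S\subseteq V$, $\partial(S)$ is the set of edges with exactly one endpoint in $S$, $\partial_{out}(S)$ is the set of vertices not in $S$ having a neighbor in $S$, and $I(S)$ is the number of vertices of $S$ having a neighbor in $S$. For disjoint $L,R\subseteq V$ with $L\cup R\neq\emptyset$, define $$b(L,R)=\frac{e(L,L)+e(R,R)+|\partial(L\cup R)|}{d\,|L\cup R|},\qquad b_{out}(L,R)=\frac{I(L)+I(R)+|\partial_{out}(L\cup R)|}{|L\cup R|}.$$ The bipartiteness constant is $\beta(G)=\min_{L,R} b(L,R)$ and the outer vertex bipartiteness constant is $\beta_{out}(G)=\min_{L,R} b_{out}(L,R)$, both minima over disjoint $L,R$ with $L\cup R\ne\emptyset$. *)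

(* Defs.v *)
From mathcomp Require Import all_boot all_order all_algebra.
Set Implicit Arguments. Unset Strict Implicit. Unset Printing Implicit Defensive.
Import Order.TTheory GRing.Theory Num.Theory.
Local Open Scope ring_scope.

(* A finite simple graph: vertex set T (a finType), adjacency e : rel T,
   assumed symmetric and irreflexive (see the theorem hypotheses). *)
Section Graph.
Variables (T : finType) (e : rel T).

Definition neighbours (v : T) : {set T} := [set u | e v u].

Definition regular (d : nat) : Prop := forall v : T, #|neighbours v| = d.

Definition connected : Prop := forall x y : T, connect e x y.

Definition bipartite : Prop :=
  exists S : {set T}, forall x y : T, e x y -> (x \in S) != (y \in S).

Definition eAB (A B : {set T}) : nat := #|[set p in setX A B | e p.1 p.2]|.

Definition boundary_size (S : {set T}) : nat := eAB S (~: S).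

Definition out_boundary (S : {set T}) : {set T} :=
  [set v in ~: S | [exists u in S, e v u]].

Definition inner (S : {set T}) : nat := #|[set v in S | [exists u in S, e v u]]|.

Definition b (d : nat) (L R : {set T}) : rat :=
  ((eAB L L + eAB R R + boundary_size (L :|: R))%:R)
  / ((d * #|L :|: R|)%:R).

Definition b_out (L R : {set T}) : rat :=
  ((inner L + inner R + #|out_boundary (L :|: R)|)%:R) / (#|L :|: R|%:R).

Definition admissible (p : {set T} * {set T}) : bool :=
  [disjoint p.1 & p.2] && (p.1 :|: p.2 != set0).

(* beta(G) = min over admissible (L,R) of b(L,R).  The default value of the
   big min is b(V, empty), which is itself admissible when V is nonempty,
   so this is exactly the minimum. *)
Definition beta (d : nat) : rat :=
  \big[Order.min/b d setT set0]_(p | admissible p) b d p.1 p.2.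

Definition beta_out : rat :=
  \big[Order.min/b_out setT set0]_(p | admissible p) b_out p.1 p.2.

End Graph.

(* Main.v *)
Require Import Defs.
From mathcomp Require Import all_boot all_order all_algebra.
Import Order.TTheory GRing.Theory Num.Theory.
Local Open Scope ring_scope.

Section Aux.
Variables (T : finType) (e : rel T).

Definition F (A B : {set T}) : nat := (\sum_(a in A) \sum_(b in B) (e a b : nat))%N.
Definition G (A B : {set T}) : nat := (\sum_(a in A) ([exists u in B, e a u] : nat))%N.

Lemma cardP_sum (A : {set T}) (P : pred T) :
  #|[set v in A | P v]| = (\sum_(v in A) (P v : nat))%N.
Proof.
rewrite -sum1_card [RHS]big_mkcond [LHS]big_mkcond /=.
apply: eq_bigr => v _; rewrite !inE; by case: (v \in A); case: (P v).
Qed.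

Lemma eAB_F A B : eAB e A B = F A B.
Proof.
rewrite /eAB /F -sum1_card.
rewrite (eq_bigr (fun a => \sum_(b | (b \in B) && e a b) 1)%N); last first.
  move=> a _; rewrite big_mkcondr /=; apply: eq_bigr => b _; by case: (e a b).
rewrite pair_big_dep /=; apply: eq_bigl => p; by rewrite !inE andbA.
Qed.

Lemma inner_G A : inner e A = G A A.
Proof. by rewrite /inner cardP_sum. Qed.

Lemma out_G S : #|out_boundary e S| = G (~: S) S.
Proof. by rewrite /out_boundary cardP_sum. Qed.

Hypothesis e_sym : symmetric e.
Variable d : nat.
Hypothesis Hreg : regular e d.

Lemma bnd_F S : boundary_size e S = F (~: S) S.
Proof.
rewrite /boundary_size eAB_F /F exchange_big /=.
apply: eq_bigr => a _; apply: eq_bigr => b _; by rewrite e_sym.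
Qed.

Lemma GF A B : (G A B <= F A B)%N.
Proof.
apply: leq_sum => a _; case: existsP => //= [[u /andP [uB eau]]].
by rewrite (bigD1 u) //= eau.
Qed.

Lemma FG A B : (F A B <= d * G A B)%N.
Proof.
rewrite /F /G big_distrr /=; apply: leq_sum => a _.
case: existsP => /= [_|nex].
  rewrite muln1 -(Hreg a) -cardP_sum /neighbours; apply: subset_leq_card.
  by apply/subsetP => v; rewrite !inE => /andP [].
rewrite muln0 leqn0 sum_nat_eq0; apply/forallP => b; apply/implyP => bB.
by case: (boolP (e a b)) => // eab; case: nex; exists b; rewrite bB.
Qed.

Lemma num_le1 L R :
  (eAB e L L + eAB e R R + boundary_size e (L :|: R) <=
   d * (inner e L + inner e R + #|out_boundary e (L :|: R)|))%N.
Proof.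
rewrite !eAB_F !inner_G bnd_F out_G !mulnDr.
by rewrite !leq_add // FG.
Qed.

Lemma num_le2 L R :
  (inner e L + inner e R + #|out_boundary e (L :|: R)| <=
   eAB e L L + eAB e R R + boundary_size e (L :|: R))%N.
Proof.
rewrite !eAB_F !inner_G bnd_F out_G.
by rewrite !leq_add // GF.
Qed.

Lemma b_le_bout L R : b e d L R <= b_out e L R.
Proof.
rewrite /b /b_out natrM invfM mulrA.
case: (posnP d) => [->|dpos].
  by rewrite invr0 mulr0 mul0r divr_ge0.
rewrite ler_wpM2r // ?invr_ge0 //.
rewrite ler_pdivrMr ?ltr0n // -natrM mulnC ler_nat; exact: num_le1.
Qed.

Lemma bout_le_b L R : (d%:R)^-1 * b_out e L R <= b e d L R.
Proof.
rewrite /b /b_out natrM invfM mulrCA.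
rewrite ler_wpM2r // ?mulr_ge0 ?invr_ge0 // ler_nat; exact: num_le2.
Qed.

End Aux.

Theorem theorem2 (T : finType) (e : rel T) (d : nat)
  (e_sym : symmetric e) (e_irr : irreflexive e)
  (Hreg : regular e d) (Hconn : connected e) (Hnb : ~ bipartite e) :
  beta e d <= beta_out e /\ (d%:R)^-1 * beta_out e <= beta e d.
Proof.
split.
  rewrite /beta /beta_out; apply: (big_ind2 (fun x y => x <= y)).
  - exact: b_le_bout.
  - move=> x1 x2 y1 y2 h1 h2; rewrite le_min !ge_min h1 h2 /=.
    by rewrite orbT.
  - move=> p _; exact: b_le_bout.
rewrite /beta /beta_out; apply: (big_ind2 (fun y x => (d%:R)^-1 * y <= x)).
- exact: bout_le_b.
- move=> x1 x2 y1 y2 h1 h2; rewrite le_min; apply/andP; split.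
    apply: le_trans h1; rewrite ler_wpM2l ?invr_ge0 // ge_min lexx //.
  apply: le_trans h2; rewrite ler_wpM2l ?invr_ge0 // ge_min lexx orbT //.
- move=> p _; exact: bout_le_b.
Qed.
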